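(* Let $G$ be an infinite group. Then $G$ is $L^1$-surjunctive if and only if for every field $k$ the ring $D^1(k[G])$ is stably finite.
   Context: For a vector space $V$, $g\in G$, $x\in V^G$: $(gx)(h)=x(g^{-1}h)$. For finite $M\subset G$, $S=\mathcal{L}(V^M,V)$, $s\in S^G$: $\sigma_s(x)(g)=s(g)((g^{-1}x)\vert_M)$. $\mathrm{LNUCA}_c(G,V)$ is the set of $\sigma_s$ with $M$ finite and $s$ constant outside a finite subset of $G$. $\Sigma(s)$ is the closure of $\{gs\}$ in $S^G$ (prodiscrete topology); $\sigma_s$ is stably injective if $\sigma_p$ is injective for all $p\in\Sigma(s)$. $G$ is $L^1$-surjunctive if for every finite-dimensional vector space $V$ over any field, every stably injective $\tau\in\mathrm{LNUCA}_c(G,V)$ is surjective. $D^1(k[G])=k[G]\times(k[G])[G]$ ($(k[G])[G]$ = finitely supported maps $G\to k[G]$) with componentwise addition and multiplication $(\alpha_1,\beta_1)*(\alpha_2,\beta_2)=(\alpha_1\alpha_2,\alpha_1\beta_2+\beta_1\alpha_2+\beta_1\beta_2)$, where $\alpha_1\alpha_2$ is the group ring product and $(\alpha\beta)(g)(h)=\sum_t\alpha(t)\beta(gt)(t^{-1}h)$, $(\beta\alpha)(g)(h)=\sum_t\beta(g)(t)\alpha(t^{-1}h)$, $(\beta\gamma)(g)(h)=\sum_t\beta(g)(t)\gamma(gt)(t^{-1}h)$. A ring $R$ is stably finite if for all $n\ge1$, $ab=1$ implies $ba=1$ in $M_n(R)$. *)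

(* Defs.v *)
From HB Require Import structures.
From mathcomp Require Import all_boot all_order all_algebra.
From mathcomp Require Import finmap.
From mathcomp Require Import boolp classical_sets cardinality fsbigop.

Set Implicit Arguments.
Unset Strict Implicit.
Unset Printing Implicit Defensive.

Import GRing.Theory.

Local Open Scope classical_set_scope.
Local Open Scope fset_scope.
Local Open Scope ring_scope.

Section LNUCA.
Variables (G : groupType) (k : fieldType) (V : vectType k).

Definition shift_cfg (g : G) (x : G -> V) : G -> V :=
  fun h => x (g^-1 * h)%g.

Definition is_linear_local (M : {fset G}) (f : (M -> V) -> V) : Prop :=
  forall (a : k) (u v : M -> V),
    f (fun m => a *: u m + v m) = a *: f u + f v.

Definition local_rules (M : {fset G}) (s : G -> (M -> V) -> V) : Prop :=
  forall g, is_linear_local (s g).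

(* sigma_s(x)(g) = s(g)((g^{-1} x)|_M); note (g^{-1}x)(m) = x(g m). *)
Definition sigma (M : {fset G}) (s : G -> (M -> V) -> V) (x : G -> V) : G -> V :=
  fun g => s g (fun m : M => shift_cfg (g^-1)%g x (fsval m)).

Definition asympt_const (M : {fset G}) (s : G -> (M -> V) -> V) : Prop :=
  exists (F : {fset G}) (s0 : (M -> V) -> V), forall g, g \notin F -> s g = s0.

Definition shift_rule (M : {fset G}) (g : G) (s : G -> (M -> V) -> V)
  : G -> (M -> V) -> V := fun h => s (g^-1 * h)%g.

(* p lies in Sigma(s), the closure of the G-orbit of s in S^G for the
   prodiscrete topology (S discrete): every basic neighbourhood of p, given by a
   finite set F of coordinates, meets the orbit. *)
Definition in_orbit_closure (M : {fset G}) (s p : G -> (M -> V) -> V) : Prop :=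
  forall F : {fset G}, exists g : G, forall h, h \in F -> p h = shift_rule g s h.

Definition stably_injective (M : {fset G}) (s : G -> (M -> V) -> V) : Prop :=
  forall p, in_orbit_closure s p -> injective (sigma p).

End LNUCA.

Definition L1_surjunctive (G : groupType) : Prop :=
  forall (k : fieldType) (V : vectType k) (M : {fset G})
         (s : G -> (M -> V) -> V),
    local_rules s -> asympt_const s -> stably_injective s ->
    forall y : G -> V, exists x : G -> V, sigma s x = y.

Section D1.
Variables (G : groupType) (k : fieldType).

Definition fin_supp (T : zmodType) (f : G -> T) : Prop :=
  finite_set [set x | f x != 0].

Definition in_groupring (a : G -> k) : Prop := fin_supp a.

Definition in_groupring2 (b : G -> G -> k) : Prop :=
  (forall g, in_groupring (b g)) /\
  finite_set [set g | exists h, b g h != 0].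

(* Elements of D^1(k[G]) = k[G] x (k[G])[G], as pairs of functions. *)
Definition D1T : Type := ((G -> k) * (G -> G -> k))%type.

Definition inD1 (x : D1T) : Prop := in_groupring x.1 /\ in_groupring2 x.2.

Definition gr_mul (a1 a2 : G -> k) : G -> k :=
  fun h => \sum_(t \in [set: G]) a1 t * a2 (t^-1 * h)%g.

Definition ab_mul (a : G -> k) (b : G -> G -> k) : G -> G -> k :=
  fun g h => \sum_(t \in [set: G]) a t * b (g * t)%g (t^-1 * h)%g.

Definition ba_mul (b : G -> G -> k) (a : G -> k) : G -> G -> k :=
  fun g h => \sum_(t \in [set: G]) b g t * a (t^-1 * h)%g.

Definition bb_mul (b c : G -> G -> k) : G -> G -> k :=
  fun g h => \sum_(t \in [set: G]) b g t * c (g * t)%g (t^-1 * h)%g.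

Definition D1_add (x y : D1T) : D1T :=
  (fun h => x.1 h + y.1 h, fun g h => x.2 g h + y.2 g h).

Definition D1_mul (x y : D1T) : D1T :=
  (gr_mul x.1 y.1,
   fun g h => ab_mul x.1 y.2 g h + ba_mul x.2 y.1 g h + bb_mul x.2 y.2 g h).

Definition D1_zero : D1T := (fun _ => 0, fun _ _ => 0).

Definition D1_one : D1T :=
  (fun h => if h == 1%g then 1 else 0, fun _ _ => 0).

Definition D1_mxmul (n : nat) (A B : 'I_n -> 'I_n -> D1T) : 'I_n -> 'I_n -> D1T :=
  fun i j => \big[D1_add/D1_zero]_(l < n) D1_mul (A i l) (B l j).

Definition D1_mxone (n : nat) : 'I_n -> 'I_n -> D1T :=
  fun i j => if i == j then D1_one else D1_zero.

Definition D1_stably_finite : Prop :=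
  forall (n : nat) (A B : 'I_n.+1 -> 'I_n.+1 -> D1T),
    (forall i j, inD1 (A i j)) -> (forall i j, inD1 (B i j)) ->
    D1_mxmul A B = @D1_mxone n.+1 -> D1_mxmul B A = @D1_mxone n.+1.

End D1.

(* Main.v *)
Require Import Defs.
From mathcomp Require Import all_boot all_order all_algebra.
From mathcomp Require Import boolp classical_sets cardinality.
From HB Require Import structures.
From mathcomp Require Import finmap.
From mathcomp Require Import fsbigop.
From mathcomp Require Import ring.

Set Implicit Arguments.
Unset Strict Implicit.
Unset Printing Implicit Defensive.
Import GRing.Theory.
Local Open Scope classical_set_scope.
Local Open Scope ring_scope.

Section Gen.
Variables (G : groupType) (k : fieldType).

Lemma fsumE (f : G -> k) (S : {fset G}) :
  (forall t, t \notin S -> f t = 0) ->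
  \sum_(t \in [set: G]) f t = \sum_(t <- S) f t.
Proof.
move=> fS; rewrite [RHS]fsbig_seq //; symmetry; apply: fsbig_widen => // t [_ /= tS].
by rewrite /preimage /= fS //; apply/negP.
Qed.

End Gen.

Section Ops.
Variables (G : groupType) (k : fieldType) (n : nat).

Definition op := G -> 'I_n -> 'I_n -> G -> k.
Definition cfg := G -> 'I_n -> k.

Definition act (c : op) (x : cfg) : cfg :=
  fun g i => \sum_(t \in [set: G]) \sum_(j < n) c g i j t * x (g * t)%g j.

Definition comp (c1 c2 : op) : op :=
  fun g i l u => \sum_(t \in [set: G]) \sum_(j < n)
                   c1 g i j t * c2 (g * t)%g j l (t^-1 * u)%g.

Definition idop : op := fun g i j t => if (i == j) && (t == 1%g) then 1 else 0.

Definition supp_in (c : op) (S : {fset G}) :=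
  forall g i j t, t \notin S -> c g i j t = 0.

Definition prodset (S1 S2 : {fset G}) : {fset G} :=
  [fset (a * b)%g | a in S1, b in S2]%fset.

Lemma act_supp c S x g i : supp_in c S ->
  act c x g i = \sum_(t <- S) \sum_(j < n) c g i j t * x (g * t)%g j.
Proof.
move=> cS; apply: fsumE => t tS; apply: big1 => j _.
by rewrite cS // mul0r.
Qed.

Lemma comp_supp c1 c2 S g i l u : supp_in c1 S ->
  comp c1 c2 g i l u = \sum_(t <- S) \sum_(j < n)
                   c1 g i j t * c2 (g * t)%g j l (t^-1 * u)%g.
Proof.
move=> cS; apply: fsumE => t tS; apply: big1 => j _.
by rewrite cS // mul0r.
Qed.

Lemma prodsetP (S1 S2 : {fset G}) a b : a \in S1 -> b \in S2 -> (a * b)%g \in prodset S1 S2.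
Proof. by move=> aS bS; apply/imfset2P; exists a => //; exists b. Qed.

Lemma comp_supp_in c1 c2 S1 S2 : supp_in c1 S1 -> supp_in c2 S2 ->
  supp_in (comp c1 c2) (prodset S1 S2).
Proof.
move=> c1S c2S g i l u uS; rewrite (comp_supp _ _ _ _ _ c1S).
apply: big1_seq => t /andP[_ tS1]; apply: big1 => j _.
rewrite c2S ?mulr0 //; apply/negP => tuS; move/negP: uS; apply.
by rewrite -[u](mulVKg t); apply: prodsetP.
Qed.

Lemma reindex_sum (F : G -> k) t (S S' : {fset G}) :
  (forall v, v \notin S -> F v = 0) -> (forall v, v \in S -> (t * v)%g \in S') ->
  \sum_(u <- S') F (t^-1 * u)%g = \sum_(v <- S) F v.
Proof.
move=> FS SS'.
rewrite -(@fsumE _ _ (fun u => F (t^-1 * u)%g) S'); last first.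
  move=> u uS'; apply: FS; apply/negP => /SS'; rewrite mulVKg => uS.
  by move/negP: uS'; apply.
rewrite -(@fsumE _ _ F S) //.
rewrite (reindex_fsbigT (fun v => (t * v)%g)).
  by apply: eq_fsbigr => v _; rewrite mulKg.
exists (fun v => (t^-1 * v)%g) => v; [exact: mulKg | exact: mulVKg].
Qed.

Lemma act_comp c1 c2 S1 S2 x : supp_in c1 S1 -> supp_in c2 S2 ->
  act c1 (act c2 x) = act (comp c1 c2) x.
Proof.
move=> c1S c2S; apply/funext => g; apply/funext => i.
set S12 := prodset S1 S2.
rewrite (act_supp _ _ _ c1S) (act_supp _ _ _ (comp_supp_in c1S c2S)).
have E1 t j : t \in S1 -> c1 g i j t * act c2 x (g * t)%g j =
   \sum_(u <- S12) \sum_(l < n) c1 g i j t * c2 (g * t)%g j l (t^-1 * u)%g * x (g * u)%g l.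
  move=> tS1; rewrite (act_supp _ _ _ c2S).
  rewrite -(@reindex_sum (fun v => \sum_(l < n) c2 (g * t)%g j l v * x (g * t * v)%g l) t S2 S12); last first.
  - by move=> v vS2; apply: prodsetP.
  - by move=> v vS2; apply: big1 => l _; rewrite c2S // mul0r.
  rewrite mulr_sumr; apply: eq_bigr => u _; rewrite mulr_sumr; apply: eq_bigr => l _.
  by rewrite mulrA -mulgA mulVKg.
rewrite big_seq_cond (eq_bigr (fun t => \sum_(j < n) \sum_(u <- S12) \sum_(l < n)
     c1 g i j t * c2 (g * t)%g j l (t^-1 * u)%g * x (g * u)%g l)); last first.
  by move=> t /andP[tS1 _]; apply: eq_bigr => j _; apply: E1.
rewrite -big_seq_cond.
under eq_bigr => t _ do rewrite exchange_big.
rewrite exchange_big; apply: eq_bigr => u _.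
under eq_bigr => t _ do rewrite exchange_big.
rewrite exchange_big; apply: eq_bigr => l _.
rewrite (comp_supp _ _ _ _ _ c1S) mulr_suml; apply: eq_bigr => t _.
by rewrite mulr_suml.
Qed.

End Ops.

Section Misc.
Variable (G : groupType).

Lemma fin_fset (A : set G) : finite_set A -> exists X : {fset G}, forall t, A t -> t \in X.
Proof. by move=> /finite_fsetP[X ->]; exists X. Qed.

Lemma avoid (Ginf : infinite_set [set: G]) (X : {fset G}) : exists g, g \notin X.
Proof.
have [//|/forallNP allX] := pselect (exists g, g \notin X).
exfalso; apply: Ginf; apply: (@sub_finite_set _ _ [set` X]).
  by move=> g _ /=; apply/negPn/negP; apply: allX.
exact: finite_fset.
Qed.

End Misc.

Section Shift.
Variables (G : groupType) (k : fieldType) (n : nat).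

Definition shift_op (g : G) (c : op G k n) : op G k n := fun h => c (g^-1 * h)%g.

Lemma act_shift g (c : op G k n) x h i :
  act (shift_op g c) x h i = act c (fun h' => x (g * h')%g) (g^-1 * h)%g i.
Proof.
rewrite /act /shift_op; apply: eq_fsbigr => t _; apply: eq_bigr => j _.
by rewrite -mulgA mulVKg.
Qed.

Lemma act_idop x : act (@idop G k n) x = x.
Proof.
apply/funext => g; apply/funext => i.
rewrite (@act_supp _ _ _ _ [fset 1%g]%fset); last first.
  by move=> h i' j t; rewrite /idop inE => /negbTE ->; rewrite andbF.
rewrite big_seq_fset1 (bigD1 i) //= big1 ?addr0.
  by rewrite /idop !eqxx mul1r mulg1.
by move=> j /negbTE ji; rewrite /idop eq_sym ji mul0r.
Qed.

Lemma act_faithful (c c' : op G k n) : (forall x, act c x = act c' x) -> c = c'.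
Proof.
move=> E; apply/funext => g; apply/funext => i; apply/funext => j; apply/funext => t.
pose x : cfg G k n := fun h l => if (h == (g * t)%g) && (l == j) then 1 else 0.
have key (d : op G k n) : act d x g i = d g i j t.
  rewrite /act (@fsumE _ _ _ [fset t]%fset); last first.
    move=> t' t't; apply: big1 => l _; rewrite /x.
    case: eqP => [/mulgI tt|]; last by rewrite mulr0.
    by move: t't; rewrite tt inE eqxx.
  rewrite big_seq_fset1 (bigD1 j) //= big1 ?addr0.
    by rewrite /x !eqxx mulr1.
  by move=> l /negbTE lj; rewrite /x eqxx lj mulr0.
by rewrite -key E key.
Qed.

End Shift.

Section D1link.
Variables (G : groupType) (k : fieldType) (N : nat).
Local Notation D1M := ('I_N -> 'I_N -> D1T G k).

Definition opD (A : D1M) : op G k N := fun g i j t => (A i j).1 t + (A i j).2 g t.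

Definition D1okM (A : D1M) := forall i j, inD1 (A i j).

Lemma D1_supp (A : D1M) : D1okM A -> exists S : {fset G},
  forall i j t, t \notin S -> (A i j).1 t = 0 /\ forall g, (A i j).2 g t = 0.
Proof.
move=> Aok.
pose U := \bigcup_(p in [set: 'I_N * 'I_N]) ([set t | (A p.1 p.2).1 t != 0] `|`
   \bigcup_(g in [set g | exists h, (A p.1 p.2).2 g h != 0]) [set t | (A p.1 p.2).2 g t != 0]).
have Ufin : finite_set U.
  apply: bigcup_finite; first exact: finite_finset.
  move=> [i j] _ /=; have [A1 [A2 A3]] := Aok i j.
  rewrite finite_setU; split; first exact: A1.
  by apply: bigcup_finite => // g _; apply: A2.
have [X HX] := fin_fset Ufin; exists X => i j t tX; split.
  apply/eqP/negP => /negP nz; move/negP: tX; apply; apply: HX.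
  by exists (i, j) => //; left.
move=> g; apply/eqP/negP => /negP nz; move/negP: tX; apply; apply: HX.
by exists (i, j) => //; right; exists g => //; exists t.
Qed.

Lemma D1_far (A : D1M) : D1okM A -> exists T : {fset G},
  forall g, g \notin T -> forall i j t, (A i j).2 g t = 0.
Proof.
move=> Aok.
pose U := \bigcup_(p in [set: 'I_N * 'I_N]) [set g | exists h, (A p.1 p.2).2 g h != 0].
have Ufin : finite_set U.
  apply: bigcup_finite; first exact: finite_finset.
  by move=> [i j] _ /=; have [A1 [A2 A3]] := Aok i j.
have [X HX] := fin_fset Ufin; exists X => g gX i j t.
apply/eqP/negP => /negP nz; move/negP: gX; apply; apply: HX.
by exists (i, j) => //; exists t.
Qed.

Lemma opD_supp (A : D1M) S :
  (forall i j t, t \notin S -> (A i j).1 t = 0 /\ forall g, (A i j).2 g t = 0) ->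
  supp_in (opD A) S.
Proof. by move=> HS g i j t tS; rewrite /opD; have [-> ->] := HS i j t tS; rewrite addr0. Qed.

Lemma mxmul1 (A B : D1M) i l h :
  (D1_mxmul A B i l).1 h = \sum_(j < N) gr_mul (A i j).1 (B j l).1 h.
Proof.
rewrite /D1_mxmul; apply: (big_morph (fun x : D1T G k => x.1 h)) => //.
Qed.

Lemma mxmul2 (A B : D1M) i l g h :
  (D1_mxmul A B i l).2 g h = \sum_(j < N) (ab_mul (A i j).1 (B j l).2 g h +
     ba_mul (A i j).2 (B j l).1 g h + bb_mul (A i j).2 (B j l).2 g h).
Proof.
rewrite /D1_mxmul; apply: (big_morph (fun x : D1T G k => x.2 g h)) => //.
Qed.

Lemma opD_mul (A B : D1M) : D1okM A ->
  opD (D1_mxmul A B) = comp (opD A) (opD B).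
Proof.
move=> Aok; have [S HS] := D1_supp Aok.
apply/funext => g; apply/funext => i; apply/funext => l; apply/funext => u.
rewrite (comp_supp _ _ _ _ _ (opD_supp HS)) /opD mxmul1 mxmul2 -big_split /=.
rewrite exchange_big; apply: eq_bigr => j _.
rewrite /gr_mul /ab_mul /ba_mul /bb_mul.
have [a0 b0] : (forall t, t \notin S -> (A i j).1 t = 0) /\
               (forall t, t \notin S -> (A i j).2 g t = 0).
  by split => t tS; have [H1 H2] := HS i j t tS; rewrite ?H1 ?H2.
rewrite !(@fsumE _ _ _ S); try by move=> t tS; rewrite ?a0 ?b0 ?mul0r.
rewrite -!big_split; apply: eq_bigr => t _ /=.
ring.
Qed.

Definition far (X : D1M) := exists T : {fset G},
  forall g, g \notin T -> forall i j t, (X i j).2 g t = 0.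

Lemma mxmul_far (A B : D1M) : D1okM A -> D1okM B -> far (D1_mxmul A B).
Proof.
move=> Aok Bok; have [S HS] := D1_supp Aok.
have [TA HTA] := D1_far Aok; have [TB HTB] := D1_far Bok.
exists (TA `|` TB `|` [fset (a * b^-1)%g | a in TB, b in S])%fset.
move=> g; rewrite !inE => /norP[/norP[gTA gTB] gX] i l h.
rewrite mxmul2; apply: big1 => j _.
rewrite /ab_mul /ba_mul /bb_mul.
rewrite !fsbig1 ?addr0 // => t _.
- by rewrite HTA // mul0r.
- by rewrite HTA // mul0r.
case: (boolP (t \in S)) => tS; last by have [-> _] := HS i j t tS; rewrite mul0r.
rewrite HTB ?mulr0 //; apply/negP => gtB; move/negP: gX; apply.
by apply/imfset2P; exists (g * t)%g => //; exists t => //; rewrite mulgK.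
Qed.

Lemma faithD (Ginf : infinite_set [set: G]) (X Y : D1M) : far X -> far Y ->
  opD X = opD Y -> X = Y.
Proof.
move=> [TX HX] [TY HY] E.
have [g0 g0T] := avoid Ginf (TX `|` TY)%fset.
move: g0T; rewrite inE => /norP[g0X g0Y].
apply/funext => i; apply/funext => j.
have E1 : (X i j).1 = (Y i j).1.
  apply/funext => t; have := congr1 (fun c => c g0 i j t) E.
  by rewrite /opD HX // HY // !addr0.
rewrite [X i j]surjective_pairing [Y i j]surjective_pairing E1; congr pair.
apply/funext => g; apply/funext => t; have := congr1 (fun c => c g i j t) E.
by rewrite /opD E1 => /addrI.
Qed.

Lemma opD_one : opD (@D1_mxone G k N) = @idop G k N.
Proof.
apply/funext => g; apply/funext => i; apply/funext => j; apply/funext => t.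
rewrite /opD /D1_mxone /idop; case: (i == j) => /=; rewrite addr0 //.
Qed.

Lemma far_one : far (@D1_mxone G k N).
Proof. by exists fset0 => g _ i j t; rewrite /D1_mxone; case: (i == j). Qed.

Definition mkD1 (c : op G k N) (c0 : 'I_N -> 'I_N -> G -> k) : D1M :=
  fun i j => (c0 i j, fun g t => c g i j t - c0 i j t).

Lemma opD_mk c c0 : opD (mkD1 c c0) = c.
Proof.
apply/funext => g; apply/funext => i; apply/funext => j; apply/funext => t.
by rewrite /opD /mkD1 /= addrC subrK.
Qed.

Lemma mkD1_ok c c0 (S T : {fset G}) : supp_in c S ->
  (forall i j t, t \notin S -> c0 i j t = 0) ->
  (forall g, g \notin T -> c g = c0) -> D1okM (mkD1 c c0).
Proof.
move=> cS c0S cT i j; rewrite /inD1 /in_groupring2 /in_groupring /fin_supp; split => /=.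
  apply: (@sub_finite_set _ _ [set` S]); last exact: finite_fset.
  by move=> t /= nz; apply/negPn/negP => tS; move: nz; rewrite c0S ?eqxx.
split.
  move=> g; apply: (@sub_finite_set _ _ [set` S]); last exact: finite_fset.
  by move=> t /= nz; apply/negPn/negP => tS; move: nz; rewrite c0S ?cS ?subrr ?eqxx.
apply: (@sub_finite_set _ _ [set` T]); last exact: finite_fset.
move=> g /= [t nz]; apply/negPn/negP => gT; move: nz; rewrite cT ?subrr ?eqxx //.
Qed.

End D1link.

Section Forward.
Variables (G : groupType) (k : fieldType) (N : nat).
Local Notation V := 'rV[k]_N.

Definition rule (S : {fset G}) (c : 'I_N -> 'I_N -> G -> k) : (S -> V) -> V :=
  fun u => \row_i \sum_(m : S) \sum_(j < N) c i j (fsval m) * u m 0 j.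

Lemma rule_eval (S : {fset G}) (c : 'I_N -> 'I_N -> G -> k) (x : G -> V) h i :
  (forall i j t, t \notin S -> c i j t = 0) ->
  (rule c (fun m : S => x (h * fsval m)%g)) 0 i =
  \sum_(t \in [set: G]) \sum_(j < N) c i j t * x (h * t)%g 0 j.
Proof.
move=> cS; rewrite mxE (@fsumE _ _ _ S); last first.
  by move=> t tS; apply: big1 => j _; rewrite cS // mul0r.
by rewrite big_seq_fsetE /=; apply: eq_bigr => m _.
Qed.

Lemma act_shift_inv (a b : op G k N) g x :
  (forall z, act a (act b z) = z) ->
  act (shift_op g a) (act (shift_op g b) x) = x.
Proof.
move=> ab; apply/funext => h; apply/funext => i.
rewrite act_shift.
have -> : (fun h' => act (shift_op g b) x (g * h')%g) =
          act b (fun h'' => x (g * h'')%g).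
  apply/funext => h'; apply/funext => j; rewrite act_shift mulKg //.
by rewrite ab mulVKg.
Qed.

Lemma shift_supp (a : op G k N) S g : supp_in a S -> supp_in (shift_op g a) S.
Proof. by move=> aS h i j t tS; apply: aS. Qed.

Lemma fwd_core (L1 : L1_surjunctive G) (a b : op G k N) (SA SB T : {fset G})
  (b0 : 'I_N -> 'I_N -> G -> k) :
  supp_in a SA -> supp_in b SB -> (forall g, g \notin T -> b g = b0) ->
  (forall z, act a (act b z) = z) -> forall y, exists x, act b x = y.
Proof.
move=> aS bS bT ab y.
pose s : G -> (SB -> V) -> V := fun g => rule (b g).
have Hsig : forall (p : G -> (SB -> V) -> V) (x : G -> V) h c,
    p h = rule c -> (forall i j t, t \notin SB -> c i j t = 0) -> forall i,
    sigma p x h 0 i = \sum_(t \in [set: G]) \sum_(j < N) c i j t * x (h * t)%g 0 j.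
  move=> p x h c ph cS i; rewrite /sigma ph /shift_cfg -(rule_eval _ _ _ cS).
  by congr (rule _ _ _ _); apply/funext => m; rewrite invgK.
have lin : local_rules s.
  move=> g a' u v; apply/rowP => i; rewrite !mxE mulr_sumr -big_split /=.
  apply: eq_bigr => m _; rewrite mulr_sumr -big_split /=.
  apply: eq_bigr => j _; rewrite !mxE; ring.
have ac : asympt_const s.
  by exists T, (rule b0) => g gT; rewrite /s bT.
have si : stably_injective s.
  move=> p pcl x1 x2 E; apply/funext => h; apply/rowP => j.
  have [g Hg] := pcl [fset (h * t)%g | t in SA]%fset.
  pose xr (x : G -> V) : cfg G k N := fun g j => x g 0 j.
  have key : forall t, t \in SA -> act (shift_op g b) (xr x1) (h * t)%g =
                                act (shift_op g b) (xr x2) (h * t)%g.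
    move=> t tSA; apply/funext => i.
    have ph : p (h * t)%g = rule (b (g^-1 * (h * t))%g).
      by rewrite Hg //; apply/imfsetP; exists t.
    have cS : forall i j t', t' \notin SB -> b (g^-1 * (h * t))%g i j t' = 0.
      by move=> ? ? ? ?; apply: bS.
    have := congr1 (fun z : G -> V => z (h * t)%g 0 i) E; rewrite /= (Hsig _ x1 _ _ ph cS) (Hsig _ x2 _ _ ph cS).
    by move=> e; rewrite /act /shift_op /xr /=; exact: e.
  have e1 := act_shift_inv g (xr x1) ab; have e2 := act_shift_inv g (xr x2) ab.
  have := congr1 (fun z => z h j) e1; have := congr1 (fun z => z h j) e2.
  rewrite /= !(act_supp _ _ _ (shift_supp g aS)) => E2 E1.
  transitivity (xr x1 h j) => //; rewrite -E1; transitivity (xr x2 h j) => //.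
  rewrite -E2 big_seq [in RHS]big_seq; apply: eq_bigr => t tSA.
  by rewrite key.
pose Y : G -> V := fun g => \row_i y g i.
have [x Ex] := L1 k _ SB s lin ac si Y.
exists (fun g j => x g 0 j); apply/funext => g; apply/funext => i.
have := congr1 (fun z : G -> V => z g 0 i) Ex; rewrite /= (Hsig s x g (b g) erefl); last first.
  by move=> ? ? ? ?; apply: bS.
by rewrite /Y mxE.
Qed.

End Forward.

Lemma fwd (G : groupType) (Ginf : infinite_set [set: G]) :
  L1_surjunctive G -> forall k : fieldType, D1_stably_finite G k.
Proof.
move=> L1 k n A B Aok Bok AB.
have [SA HSA] := D1_supp Aok; have [SB HSB] := D1_supp Bok.
have [TB HTB] := D1_far Bok.
have aS := opD_supp HSA; have bS := opD_supp HSB.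
have bT : forall g, g \notin TB -> opD B g = (fun i j t => (B i j).1 t).
  by move=> g gT; apply/funext => i; apply/funext => j; apply/funext => t;
     rewrite /opD HTB // addr0.
have ab : forall z, act (opD A) (act (opD B) z) = z.
  by move=> z; rewrite (act_comp z aS bS) -opD_mul // AB opD_one act_idop.
have surj := fwd_core L1 aS bS bT ab.
have ba : comp (opD B) (opD A) = @idop G k n.+1.
  apply: act_faithful => x; rewrite -(act_comp x bS aS) act_idop.
  by have [z <-] := surj x; rewrite ab.
apply: (faithD Ginf); [exact: mxmul_far | exact: far_one |].
by rewrite opD_mul // ba opD_one.
Qed.

Section ZornFun.
Variables (T : Type) (k : fieldType).

Definition subsp (Z : set (T -> k)) :=
  Z (fun _ => 0) /\ forall a u v, Z u -> Z v -> Z (fun t => a * u t + v t).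

Lemma subsp_lin Z a b u v : subsp Z -> Z u -> Z v -> Z (fun t => a * u t + b * v t).
Proof.
move=> [Z0 ZC] Zu Zv.
have Zbv : Z (fun t => b * v t).
  have := ZC b v _ Zv Z0; congr Z; apply/funext => t; exact: addr0.
exact: ZC.
Qed.

Lemma subsp_scale Z a u : subsp Z -> Z u -> Z (fun t => a * u t).
Proof.
move=> ZS Zu; have := subsp_lin a 0 ZS Zu Zu; congr Z; apply/funext => t; ring.
Qed.

Lemma zorn_functional (W : set (T -> k)) (e : T -> k) :
  subsp W -> ~ W e -> exists f : (T -> k) -> k,
  [/\ forall a u v, f (fun t => a * u t + v t) = a * f u + f v,
      forall w, W w -> f w = 0 & f e = 1].
Proof.
move=> WS We.
pose good (Z : set (T -> k)) := [/\ subsp Z, W `<=` Z & ~ Z e].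
pose P (Z : set (T -> k)) := Z = set0 \/ good Z.
have Pgood Z u : P Z -> Z u -> good Z.
  by case=> [-> //|//].
have [A [PA Amax]] : exists A, P A /\ forall B, A `<` B -> ~ P B.
  apply: Zorn_bigcup => F FP Ftot.
  have [[Z0 [FZ0 [u0 Z0u]]]|none] := pselect (exists Z, F Z /\ exists u, Z u); last first.
    left; apply/seteqP; split => // u [Z FZ Zu]; apply: none; exists Z; split => //.
    by exists u.
  have [Z0S WZ0 Z0e] := Pgood _ _ (FP _ FZ0) Z0u.
  right; split.
  - split; first by exists Z0 => //; case: Z0S.
    move=> a u v [Z1 FZ1 Z1u] [Z2 FZ2 Z2v].
    have [Z1S _ _] := Pgood _ _ (FP _ FZ1) Z1u.
    have [Z2S _ _] := Pgood _ _ (FP _ FZ2) Z2v.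
    have [Z12|Z21] := Ftot _ _ FZ1 FZ2.
    + by exists Z2 => //; apply: (proj2 Z2S) => //; apply: Z12.
    + by exists Z1 => //; apply: (proj2 Z1S) => //; apply: Z21.
  - by move=> w Ww; exists Z0 => //; apply: WZ0.
  - move=> [Z FZ Ze]; have [_ _] := Pgood _ _ (FP _ FZ) Ze; exact.
have [AS WA Ae] : good A.
  case: PA => [A0|//]; exfalso; apply: (Amax W).
    rewrite A0; split; first by [].
    by move=> /(_ _ (proj1 WS)).
  by right; split.
have decomp u : exists c, A (fun t => u t - c * e t).
  have [Au|nAu] := pselect (A u).
    exists 0; have -> : (fun t => u t - 0 * e t) = u.
      by apply/funext => t; ring.
    done.
  pose B := [set w | exists a z, A z /\ w = (fun t => a * u t + z t)].
  have AB : A `<` B.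
    split.
      move=> z Az; exists 0, z; split => //; apply/funext => t; ring.
    move=> BA; apply: nAu; apply: BA; exists 1, (fun _ => 0); split; first exact: (proj1 AS).
    by apply/funext => t; ring.
  have nPB := Amax B AB.
  have Be : B e.
    have [//|nBe] := pselect (B e); exfalso; apply: nPB; right; split => //.
      split.
        exists 0, (fun _ => 0); split; first exact: (proj1 AS).
        by apply/funext => t; ring.
      move=> a' w1 w2 [a1 [z1 [Az1 ->]]] [a2 [z2 [Az2 ->]]].
      exists (a' * a1 + a2), (fun t => a' * z1 t + z2 t); split.
        exact: (proj2 AS).
      by apply/funext => t; ring.
    move=> w Ww; exists 0, w; split; first exact: WA.
    by apply/funext => t; ring.
  case: Be => a [z [Az ez]].
  have a0 : a != 0.
    apply/eqP => a0; apply: Ae; rewrite ez a0.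
    have -> : (fun t => 0 * u t + z t) = z by apply/funext => t; ring.
    done.
  exists a^-1; have := subsp_scale (- a^-1) AS Az; congr A; apply/funext => t.
  by rewrite ez; field.
have uniq u c c' : A (fun t => u t - c * e t) -> A (fun t => u t - c' * e t) -> c = c'.
  move=> H1 H2; have [//|ne] := eqVneq c c'; exfalso; apply: Ae.
  have ne' : c' - c != 0 by rewrite subr_eq0 eq_sym.
  have := subsp_lin ((c' - c)^-1) (- (c' - c)^-1) AS H1 H2; congr A.
  by apply/funext => t; field.
pose f u := projT1 (cid (decomp u)).
have fP u : A (fun t => u t - f u * e t) := projT2 (cid (decomp u)).
exists f; split.
- move=> a u v; apply: (uniq (fun t => a * u t + v t)); first exact: fP.
  have := subsp_lin a 1 AS (fP u) (fP v); congr A; apply/funext => t; ring.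
- move=> w Ww; apply: (uniq w); first exact: fP.
  have -> : (fun t => w t - 0 * e t) = w by apply/funext => t; ring.
  exact: WA.
- apply: (uniq e); first exact: fP.
  have -> : (fun t => e t - 1 * e t) = (fun _ => 0) by apply/funext => t; ring.
  exact: (proj1 AS).
Qed.

End ZornFun.

Section LinF.
Variables (T : Type) (k : fieldType) (f : (T -> k) -> k).
Hypothesis flin : forall a u v, f (fun t => a * u t + v t) = a * f u + f v.

Lemma f0 : f (fun _ => 0) = 0.
Proof.
have := flin 1 (fun _ => 0) (fun _ => 0).
have -> : (fun _ : T => 1 * 0 + 0) = (fun _ => 0 : k) by apply/funext => t; ring.
rewrite mul1r => H; have := congr1 (fun z => z - f (fun _ => 0)) H.
by rewrite addrK subrr.
Qed.

Lemma fscale a u : f (fun t => a * u t) = a * f u.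
Proof.
have := flin a u (fun _ => 0); rewrite f0 addr0 => <-; congr f.
by apply/funext => t; rewrite addr0.
Qed.

Lemma fsum (I : Type) (r : seq I) (F : I -> T -> k) :
  f (fun t => \sum_(x <- r) F x t) = \sum_(x <- r) f (F x).
Proof.
elim: r => [|x r IH].
  rewrite big_nil; transitivity (f (fun _ => 0)); last exact: f0.
  by congr f; apply/funext => t; rewrite big_nil.
rewrite big_cons -IH -[f (F x)]mul1r -flin; congr f.
by apply/funext => t; rewrite big_cons mul1r.
Qed.

End LinF.

Section Covector.
Variables (G : groupType) (k : fieldType) (n : nat).
Local Notation T := (G * 'I_n)%type.

Definition phi (c : op G k n) h i : T -> k := fun p => c h i p.2 (h^-1 * p.1)%g.
Definition delta (q : T) : T -> k := fun p => if p == q then 1 else 0.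

Lemma sum_delta (F : G -> k) (g : G) :
  \sum_(t \in [set: G]) F t * (if t == g then 1 else 0) = F g.
Proof.
rewrite (@fsumE _ _ _ [fset g]%fset); last first.
  by move=> t; rewrite inE => /negbTE ->; rewrite mulr0.
by rewrite big_seq_fset1 eqxx mulr1.
Qed.

Lemma sum_delta_ord (F : 'I_n -> k) (j : 'I_n) :
  \sum_(l < n) F l * (if l == j then 1 else 0) = F j.
Proof.
rewrite (bigD1 j) //= eqxx mulr1 big1 ?addr0 // => l /negbTE ->; exact: mulr0.
Qed.

Lemma phi_delta (c : op G k n) (S : {fset G}) h i : supp_in c S ->
  phi c h i = fun p => \sum_(t <- S) \sum_(j < n) c h i j t * delta ((h * t)%g, j) p.
Proof.
move=> cS; apply/funext => -[g j'] /=; rewrite /phi /=.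
rewrite -(@fsumE _ _ (fun t => \sum_(j < n) c h i j t * delta ((h * t)%g, j) (g, j'))); last first.
  by move=> t tS; apply: big1 => j _; rewrite cS // mul0r.
rewrite (eq_fsbigr (fun t => (\sum_(j < n) c h i j t * (if j == j' then 1 else 0)) *
                             (if t == (h^-1 * g)%g then 1 else 0))); last first.
  move=> t _; rewrite mulr_suml; apply: eq_bigr => j _; rewrite /delta.
  rewrite xpair_eqE; case: (eqVneq g (h * t)%g) => [->|ne].
    by rewrite mulKg !eqxx /= mulr1 [j' == j]eq_sym.
  have -> : (t == (h^-1 * g)%g) = false.
    by apply/negbTE; apply: contra_neq ne => ->; rewrite mulVKg.
  by rewrite !mulr0.
by rewrite sum_delta sum_delta_ord.
Qed.

Lemma covector (c : op G k n) (S : {fset G}) : supp_in c S -> injective (act c) ->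
  forall g0 j0, exists (R : {fset G}) (w : G -> 'I_n -> k),
  forall x, x g0 j0 = \sum_(h <- R) \sum_(i < n) w h i * act c x h i.
Proof.
move=> cS cinj g0 j0.
pose W : set (T -> k) := [set u | exists (R : {fset G}) (w : G -> 'I_n -> k),
  (forall h i, h \notin R -> w h i = 0) /\
  u = fun p => \sum_(h \in [set: G]) \sum_(i < n) w h i * phi c h i p].
have WS : subsp W.
  split.
    exists fset0, (fun _ _ => 0); split => //; apply/funext => p.
    by rewrite fsbig1 // => h _; apply: big1 => i _; rewrite mul0r.
  move=> a u v [R1 [w1 [w1R ->]]] [R2 [w2 [w2R ->]]].
  exists (R1 `|` R2)%fset, (fun h i => a * w1 h i + w2 h i); split.
    by move=> h i; rewrite inE => /norP[h1 h2]; rewrite w1R // w2R // mulr0 addr0.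
  apply/funext => p.
  have Z1 (w' : G -> 'I_n -> k) (R' : {fset G}) : (forall h i, h \notin R' -> w' h i = 0) ->
     forall h, h \notin (R1 `|` R2)%fset -> (R' `<=` (R1 `|` R2))%fset ->
     \sum_(i < n) w' h i * phi c h i p = 0.
    move=> w'R h hR sub; apply: big1 => i _; rewrite w'R ?mul0r //.
    by apply: contra hR; apply: (fsubsetP sub).
  rewrite !(@fsumE _ _ _ (R1 `|` R2)%fset).
  - rewrite mulr_sumr -big_split; apply: eq_bigr => h _.
    rewrite mulr_sumr -big_split; apply: eq_bigr => i _; by rewrite mulrDl mulrA.
  - move=> h hR; apply: big1 => i _; rewrite inE in hR; case/norP: hR => h1 h2.
    by rewrite w1R // w2R // mulr0 addr0 mul0r.
  - by move=> h hR; apply: (Z1 w2 R2) => //; apply: fsubsetUr.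
  - by move=> h hR; apply: (Z1 w1 R1) => //; apply: fsubsetUl.
have [[R [w [wR Ee]]]|nWe] := pselect (W (delta (g0, j0))); last first.
  have [f [flin fW fe]] := zorn_functional WS nWe.
  pose x : cfg G k n := fun g j => f (delta (g, j)).
  have ax : act c x = act c (fun _ _ => 0).
    apply/funext => h; apply/funext => i.
    rewrite !(act_supp _ _ _ cS) [RHS]big1; last by move=> t _; apply: big1 => j _; rewrite mulr0.
    transitivity (f (phi c h i)); last first.
      apply: fW; exists [fset h]%fset, (fun h' i' => if (h' == h) && (i' == i) then 1 else 0).
      split; first by move=> h' i'; rewrite inE => /negbTE ->.
      apply/funext => p; rewrite (@fsumE _ _ _ [fset h]%fset); last first.
        by move=> t; rewrite inE => /negbTE tn; apply: big1 => i' _; rewrite tn mul0r.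
      rewrite big_seq_fset1 (bigD1 i) //= !eqxx mul1r big1 ?addr0 //.
      by move=> i' /negbTE ->; rewrite andbF mul0r.
    rewrite (phi_delta _ _ cS) (fsum flin); apply: eq_bigr => t _.
    rewrite (fsum flin); apply: eq_bigr => j _; rewrite (fscale flin) //.
  have := congr1 (fun z => z g0 j0) (cinj _ _ ax); rewrite /x fe => /eqP.
  by rewrite oner_eq0.
exists R, w => x.
pose S' := (g0 |` prodset R S)%fset.
have E1 : x g0 j0 = \sum_(g <- S') \sum_(j < n) delta (g0, j0) (g, j) * x g j.
  rewrite -(@fsumE _ _ (fun g => \sum_(j < n) delta (g0, j0) (g, j) * x g j)); last first.
    move=> g gS; apply: big1 => j _; rewrite /delta xpair_eqE.
    have -> : (g == g0) = false.
      by apply/negbTE; apply: contra gS => /eqP ->; rewrite fset1U1.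
    by rewrite mul0r.
  rewrite (eq_fsbigr (fun g => x g j0 * (if g == g0 then 1 else 0))); last first.
    move=> g _; rewrite /delta; case: (eqVneq g g0) => [->|ne].
      rewrite mulr1 (bigD1 j0) //= xpair_eqE !eqxx mul1r big1 ?addr0 //.
      by move=> j /negbTE jn; rewrite xpair_eqE jn andbF mul0r.
    by rewrite mulr0; apply: big1 => j _; rewrite xpair_eqE (negbTE ne) mul0r.
  by rewrite sum_delta.
rewrite E1 Ee /=.
have E2 g j : \sum_(h \in [set: G]) \sum_(i < n) w h i * phi c h i (g, j) =
              \sum_(h <- R) \sum_(i < n) w h i * phi c h i (g, j).
  by apply: fsumE => h hR; apply: big1 => i _; rewrite wR // mul0r.
under eq_bigr => g _ do under eq_bigr => j _ do rewrite E2 mulr_suml.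
under eq_bigr => g _ do rewrite exchange_big.
rewrite exchange_big big_seq [in RHS]big_seq; apply: eq_bigr => h hR.
under eq_bigr => g _ do under eq_bigr => j _ do rewrite mulr_suml.
under eq_bigr => g _ do rewrite exchange_big.
rewrite exchange_big; apply: eq_bigr => i _.
rewrite (act_supp _ _ _ cS) mulr_sumr.
rewrite -(@reindex_sum _ _ (fun t => w h i * \sum_(j < n) c h i j t * x (h * t)%g j) h S S'); last first.
- by move=> v vS; apply: fset1Ur; exact: prodsetP.
- by move=> v vS; rewrite big1 ?mulr0 // => j _; rewrite cS // mul0r.
apply: eq_bigr => g _; rewrite mulr_sumr; apply: eq_bigr => j _.
by rewrite /phi /= mulVKg mulrA.
Qed.

End Covector.

Section Backward.
Variables (G : groupType) (k : fieldType) (N : nat).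
Hypothesis Ginf : infinite_set [set: G].

Lemma act_eq_at (c c' : op G k N) x h : c h = c' h -> act c x h = act c' x h.
Proof. by move=> E; apply/funext => i; rewrite /act E. Qed.

Lemma left_inv_uniform (c0 : 'I_N -> 'I_N -> G -> k) (S : {fset G}) :
  supp_in (fun _ : G => c0) S -> injective (act (fun _ : G => c0)) ->
  exists (S0 : {fset G}) (d0 : 'I_N -> 'I_N -> G -> k),
  (forall j i t, t \notin S0 -> d0 j i t = 0) /\
  forall x g0 j0, x g0 j0 = \sum_(t \in [set: G]) \sum_(i < N) d0 j0 i t *
                              act (fun _ : G => c0) x (g0 * t)%g i.
Proof.
move=> cS cinj.
have H0 : forall j0 : 'I_N, exists Rw : {fset G} * (G -> 'I_N -> k),
  forall x, x 1%g j0 = \sum_(h <- Rw.1) \sum_(i < N) Rw.2 h i * act (fun _ : G => c0) x h i.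
  move=> j0; have [R [w Hw]] := covector cS cinj 1%g j0.
  by exists (R, w).
have [f fP] := choice H0.
have [S0 HS0] : exists S0 : {fset G}, forall t,
    (\bigcup_(j in [set: 'I_N]) [set` (f j).1]) t -> t \in S0.
  by apply: fin_fset; apply: bigcup_finite => // j _; exact: finite_fset.
exists S0, (fun j i t => if t \in (f j).1 then (f j).2 t i else 0); split.
  move=> j i t tS0; case: ifPn => // tf; exfalso; move/negP: tS0; apply.
  by apply: HS0; exists j.
move=> x g0 j0.
pose x' : cfg G k N := fun h => x (g0 * h)%g.
have eqv : forall h, act (fun _ : G => c0) x' h = act (fun _ : G => c0) x (g0 * h)%g.
  move=> h; apply/funext => i; rewrite /act; apply: eq_fsbigr => t _.
  by apply: eq_bigr => j _; rewrite /x' mulgA.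
have := fP j0 x'; rewrite /x' mulg1 => ->.
rewrite (@fsumE _ _ _ (f j0).1); last first.
  by move=> t tf; apply: big1 => i _; rewrite (negbTE tf) mul0r.
rewrite big_seq [in RHS]big_seq; apply: eq_bigr => h hf.
by apply: eq_bigr => i _; rewrite hf eqv.
Qed.

Lemma left_inv (c : op G k N) (c0 : 'I_N -> 'I_N -> G -> k) (S T : {fset G}) :
  supp_in c S -> (forall g, g \notin T -> c g = c0) -> injective (act c) ->
  injective (act (fun _ : G => c0)) ->
  exists (d : op G k N) (Sd Td : {fset G}) (d0 : 'I_N -> 'I_N -> G -> k),
  [/\ supp_in d Sd, (forall j i t, t \notin Sd -> d0 j i t = 0),
      (forall g, g \notin Td -> d g = d0) & forall x, act d (act c x) = x].
Proof.
move=> cS cT cinj c0inj.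
have c0S : supp_in (fun _ : G => c0) S.
  have [g1 g1T] := avoid Ginf T.
  by move=> g i j t tS; rewrite -(cT _ g1T); apply: cS.
have [S0 [d0 [d0S Hd0]]] := left_inv_uniform c0S c0inj.
pose B := [fset (a * t^-1)%g | a in T, t in S0]%fset.
have H1 : forall p : G * 'I_N, exists Rw : {fset G} * (G -> 'I_N -> k),
  forall x, x p.1 p.2 = \sum_(h <- Rw.1) \sum_(i < N) Rw.2 h i * act c x h i.
  move=> [g0 j0]; have [R [w Hw]] := covector cS cinj g0 j0.
  by exists (R, w).
have [f fP] := choice H1.
pose d : op G k N := fun g0 j0 i t => if g0 \in B then
  (if (g0 * t)%g \in (f (g0, j0)).1 then (f (g0, j0)).2 (g0 * t)%g i else 0)
  else d0 j0 i t.
have [Sd HSd] : exists Sd : {fset G}, forall t,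
    ([set` S0] `|` \bigcup_(p in [set` B] `*` [set: 'I_N])
       ((fun u => (p.1^-1 * u)%g) @` [set` (f p).1])) t -> t \in Sd.
  apply: fin_fset; rewrite finite_setU; split; first exact: finite_fset.
  apply: bigcup_finite.
    by apply: finite_setX; [exact: finite_fset | exact: finite_finset].
  by move=> p _; apply: finite_image; exact: finite_fset.
exists d, Sd, B, d0; split.
- move=> g0 j0 i t tSd; rewrite /d; case: ifPn => g0B.
    case: ifPn => // gtR; exfalso; move/negP: tSd; apply; apply: HSd; right.
    by exists (g0, j0) => //; exists (g0 * t)%g => //; rewrite mulKg.
  by apply: d0S; apply: contra tSd => tS0; apply: HSd; left.
- by move=> j i t tSd; apply: d0S; apply: contra tSd => tS0; apply: HSd; left.
- by move=> g gB; apply/funext => j; apply/funext => i; apply/funext => t;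
     rewrite /d (negbTE gB).
move=> x; apply/funext => g0; apply/funext => j0.
rewrite {1}/act; case: (boolP (g0 \in B)) => g0B.
  pose R := (f (g0, j0)).1; pose w := (f (g0, j0)).2.
  pose F := fun h => \sum_(i < N) (if h \in R then w h i else 0) * act c x h i.
  rewrite (eq_fsbigr (fun t => F (g0 * t)%g)); last first.
    by move=> t _; apply: eq_bigr => i _; rewrite /d g0B.
  rewrite -(reindex_fsbigT (fun t => (g0 * t)%g) F); last first.
    by exists (fun t => (g0^-1 * t)%g) => t; [exact: mulKg | exact: mulVKg].
  rewrite (@fsumE _ _ _ R); last first.
    by move=> h hR; apply: big1 => i _; rewrite (negbTE hR) mul0r.
  rewrite (fP (g0, j0)) /= big_seq [in RHS]big_seq; apply: eq_bigr => h hR.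
  by apply: eq_bigr => i _; rewrite hR.
rewrite [RHS]Hd0; apply: eq_fsbigr => t _; apply: eq_bigr => i _.
rewrite /d (negbTE g0B); case: (boolP (t \in S0)) => tS0; last first.
  by rewrite d0S // !mul0r.
congr (_ * _); rewrite (act_eq_at (c' := fun _ : G => c0)) //; apply: cT.
apply: contra g0B => gtT; apply/imfset2P; exists (g0 * t)%g => //.
by exists t => //; rewrite mulgK.
Qed.

End Backward.

Lemma bwd_core (G : groupType) (Ginf : infinite_set [set: G]) (k : fieldType)
  (SF : D1_stably_finite G k) n (c : op G k n.+1) c0 (S T : {fset G}) :
  supp_in c S -> (forall g, g \notin T -> c g = c0) -> injective (act c) ->
  injective (act (fun _ : G => c0)) -> forall y, exists x, act c x = y.
Proof.
move=> cS cT cinj c0inj y.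
have [d [Sd [Td [d0 [dS d0S dT dc]]]]] := left_inv Ginf cS cT cinj c0inj.
have c0S : forall i j t, t \notin S -> c0 i j t = 0.
  have [g1 g1T] := avoid Ginf T.
  by move=> i j t tS; rewrite -(cT _ g1T); apply: cS.
have Aok := mkD1_ok dS d0S dT; have Bok := mkD1_ok cS c0S cT.
have AB : D1_mxmul (mkD1 d d0) (mkD1 c c0) = @D1_mxone G k n.+1.
  apply: (faithD Ginf); [exact: mxmul_far | exact: far_one |].
  rewrite opD_mul // !opD_mk opD_one; apply: act_faithful => x.
  by rewrite -(act_comp x dS cS) dc act_idop.
have BA := SF n _ _ Aok Bok AB.
have := congr1 (@opD _ _ _) BA; rewrite opD_mul // !opD_mk opD_one => cd.
by exists (act d y); rewrite (act_comp y cS dS) cd act_idop.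
Qed.

Import VectorInternalTheory.

Section Trans.
Variables (G : groupType) (k : fieldType) (V : vectType k) (M : {fset G}).
Local Notation N := (dim V).

Section LL.
Variable f : (M -> V) -> V.
Hypothesis flin : is_linear_local f.

Lemma lf0 : f (fun _ => 0) = 0.
Proof.
have := flin 1 (fun _ => 0) (fun _ => 0).
have -> : (fun _ : M => 1 *: (0 : V) + 0) = (fun _ => 0) by apply/funext => t; rewrite scale1r addr0.
rewrite scale1r => H; have := congr1 (fun z => z - f (fun _ => 0)) H.
by rewrite addrK subrr.
Qed.

Lemma lfZ a u : f (fun m => a *: u m) = a *: f u.
Proof.
have := flin a u (fun _ => 0); rewrite lf0 addr0 => <-; congr f.
by apply/funext => t; rewrite addr0.
Qed.

Lemma lfsum (I : Type) (r : seq I) (F : I -> M -> V) :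
  f (fun m => \sum_(x <- r) F x m) = \sum_(x <- r) f (F x).
Proof.
elim: r => [|x r IH].
  rewrite big_nil; transitivity (f (fun _ => 0)); last exact: lf0.
  by congr f; apply/funext => t; rewrite big_nil.
rewrite big_cons -IH -[f (F x)]scale1r -flin; congr f.
by apply/funext => t; rewrite big_cons scale1r.
Qed.

End LL.

Definition ev (j : 'I_N) : V := r2v (delta_mx 0 j).
Definition Ub (m : M) (j : 'I_N) : M -> V := fun m' => if m' == m then ev j else 0.
Definition coef (f : (M -> V) -> V) : 'I_N -> 'I_N -> G -> k :=
  fun i j t => oapp (fun m : M => v2r (f (Ub m j)) 0 i) 0 (insub t).

Lemma coef_val f i j (m : M) : coef f i j (val m) = v2r (f (Ub m j)) 0 i.
Proof. by rewrite /coef valK. Qed.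

Lemma coef_out f i j t : t \notin M -> coef f i j t = 0.
Proof. by move=> tM; rewrite /coef insubN. Qed.

Lemma decomp (u : M -> V) :
  u = fun m' => \sum_(m : M) \sum_(j < N) v2r (u m) 0 j *: Ub m j m'.
Proof.
apply/funext => m'; rewrite (bigD1 m') //= [X in _ + X]big1 ?addr0; last first.
  move=> m mm; apply: big1 => j _; rewrite /Ub.
  case: (eqVneq m' m) => [E|_]; [by move: mm; rewrite E eqxx | by rewrite scaler0].
rewrite /Ub eqxx.
apply: v2r_inj; rewrite linear_sum; rewrite {1}[v2r (u m')]row_sum_delta.
by apply: eq_bigr => j _; rewrite linearZ /= /ev r2vK.
Qed.

Lemma rep f u i : is_linear_local f ->
  v2r (f u) 0 i = \sum_(m : M) \sum_(j < N) coef f i j (val m) * v2r (u m) 0 j.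
Proof.
move=> flin; rewrite {1}(decomp u) (lfsum flin) linear_sum summxE.
apply: eq_bigr => m _; rewrite (lfsum flin) linear_sum summxE.
apply: eq_bigr => j _; rewrite (lfZ flin) linearZ mxE coef_val.
by rewrite mulrC.
Qed.

Definition xr (x : G -> V) : cfg G k N := fun h j => v2r (x h) 0 j.
Definition mkx (z : cfg G k N) : G -> V := fun h => r2v (\row_j z h j).

Lemma xr_mkx z : xr (mkx z) = z.
Proof. by apply/funext => h; apply/funext => j; rewrite /xr /mkx r2vK mxE. Qed.

Lemma sig_rep (p : G -> (M -> V) -> V) x g i : is_linear_local (p g) ->
  v2r (sigma p x g) 0 i = act (fun h => coef (p h)) (xr x) g i.
Proof.
move=> plin; rewrite /sigma rep // (@act_supp _ _ _ _ M); last first.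
  by move=> h i' j t tM; rewrite coef_out.
rewrite big_seq_fsetE /=; apply: eq_bigr => m _; apply: eq_bigr => j _.
by rewrite /shift_cfg invgK.
Qed.

End Trans.

Lemma surjN (G : groupType) (Ginf : infinite_set [set: G]) (k : fieldType)
  (SF : D1_stably_finite G k) N (c : op G k N) c0 (S T : {fset G}) :
  supp_in c S -> (forall g, g \notin T -> c g = c0) -> injective (act c) ->
  injective (act (fun _ : G => c0)) -> forall y, exists x, act c x = y.
Proof.
case: N c c0 => [|n] c c0; last exact: bwd_core.
move=> _ _ _ _ y; exists y; apply/funext => g; apply/funext => i.
by case: i.
Qed.

Lemma bwd (G : groupType) (Ginf : infinite_set [set: G]) :
  (forall k : fieldType, D1_stably_finite G k) -> L1_surjunctive G.
Proof.
move=> SF k V M s lin [F [s0 Fs0]] si y.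
pose c : op G k (dim V) := fun h => coef (s h).
pose c0 := coef s0.
have cS : supp_in c M by move=> h i j t tM; rewrite /c coef_out.
have cT : forall g, g \notin F -> c g = c0 by move=> g gF; rewrite /c Fs0.
have [g1 g1F] := avoid Ginf F.
have s0lin : is_linear_local s0 by rewrite -(Fs0 _ g1F); apply: lin.
have injp : forall p : G -> (M -> V) -> V, in_orbit_closure s p ->
    (forall g, is_linear_local (p g)) -> injective (act (fun h => coef (p h))).
  move=> p pcl plin z1 z2 E.
  have := si p pcl (mkx z1) (mkx z2).
  have -> : sigma p (mkx z1) = sigma p (mkx z2).
    apply/funext => g; apply: v2r_inj; apply/rowP => i.
    by rewrite !sig_rep // !xr_mkx E.
  by move=> /(_ erefl) e; rewrite -(xr_mkx z1) e xr_mkx.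
have cinj : injective (act c).
  apply: injp => // F'; exists 1%g => h _; rewrite /shift_rule invg1 mul1g //.
have c0inj : injective (act (fun _ : G => c0)).
  apply: (injp (fun _ => s0)) => // F'.
  have [g gX] := avoid Ginf [fset (h * f^-1)%g | h in F', f in F]%fset.
  exists g => h hF'; rewrite /shift_rule Fs0 //; apply: contra gX => ghF.
  apply/imfset2P; exists h => //; exists (g^-1 * h)%g => //.
  have e : ((g^-1 * h)^-1 = h^-1 * g)%g.
    by apply: mulg1_eq; rewrite -mulgA mulVKg mulVg.
  by rewrite e mulVKg.
have [z Ez] := surjN Ginf (SF k) cS cT cinj c0inj (xr y).
exists (mkx z); apply/funext => g; apply: v2r_inj; apply/rowP => i.
by rewrite sig_rep // xr_mkx Ez.
Qed.

Theorem corollary7p3 (G : groupType) (Ginf : infinite_set [set: G]) :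
  L1_surjunctive G <-> (forall k : fieldType, D1_stably_finite G k).
Proof. by split; [exact: fwd | exact: bwd]. Qed.
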